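(* The category $\mathbf{STDMT}$ of spatial $T_D$-algebras and MT-morphisms is a full reflective subcategory of the category $\mathbf{MT_D}$ of MT-algebras and D-morphisms. For each MT-algebra $M$, the reflection is the D-morphism $\chi_M:M\to\mathcal P\,\mathrm{at}_D M$, $\chi_M(a)=\{x\in\mathrm{at}_D M: x\le a\}$: for every D-morphism $f:M\to N$ with $N$ a spatial $T_D$-algebra there is a unique MT-morphism $\widehat f:\mathcal P\,\mathrm{at}_DM\to N$ with $\widehat f\circ\chi_M=f$ (namely $\widehat f(S)=\bigvee\{f(x):x\in S\}$).
   Context: An MT-algebra is a pair $(M,\square)$ where $M$ is a complete boolean algebra and $\square:M\to M$ satisfies $\square 1=1$, $\square(a\wedge b)=\square a\wedge\square b$, $\square a\le a$, $\square a\le\square\square a$; $\Diamond a=\neg\square\neg a$; open: $\square a=a$; locally closed: $a=\square b\wedge\Diamond c$; $\mathcal O M$ the set of open elements. $M$ is a $T_D$-algebra if every element is a join of locally closed elements. $\mathrm{at}\,M$ is the set of atoms with topology $\{\eta_M(u):u\in\mathcal OM\}$, $\eta_M(a)=\{x\in\mathrm{at}\,M:x\le a\}$; $M$ is spatial if $\eta_M:M\to\mathcal P(\mathrm{at}\,M)$ is injective. $\mathrm{at}_DM$ is the subspace of locally closed atoms; $\mathcal P\,\mathrm{at}_DM$ is its powerset MT-algebra (interior = topological interior in $\mathrm{at}_DM$; its opens are exactly $\chi_M[\mathcal O M]$). An MT-morphism is a complete boolean homomorphism $h$ with $h(\square a)\le\square h(a)$; its left adjoint is $h^*(b)=\bigwedge\{a:b\le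 h(a)\}$; $h$ is a D-morphism if $h^*$ maps locally closed atoms to locally closed atoms. *)

(* Defs.v *)
Record MTAlg : Type := MkMTAlg {
  car : Type;
  le  : car -> car -> Prop;
  sup : (car -> Prop) -> car;
  inf : (car -> Prop) -> car;
  neg : car -> car;
  box : car -> car
}.

Section Ops.
Variable M : MTAlg.
Definition bot : car M := sup M (fun _ => False).
Definition top : car M := inf M (fun _ => False).
Definition join (a b : car M) : car M := sup M (fun x => x = a \/ x = b).
Definition meet (a b : car M) : car M := inf M (fun x => x = a \/ x = b).
Definition dia (a : car M) : car M := neg M (box M (neg M a)).
Definition is_open (a : car M) : Prop := box M a = a.
Definition locally_closed (a : car M) : Prop :=
  exists b c, a = meet (box M b) (dia c).
Definition is_atom (x : car M) : Prop :=
  x <> bot /\ forall y, le M y x -> y = bot \/ y = x.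

(** Axioms: complete boolean algebra + interior operator (S4). *)
Definition is_MT : Prop :=
  (forall a, le M a a) /\
  (forall a b c, le M a b -> le M b c -> le M a c) /\
  (forall a b, le M a b -> le M b a -> a = b) /\
  (forall (P : car M -> Prop) x, P x -> le M x (sup M P)) /\
  (forall (P : car M -> Prop) b, (forall x, P x -> le M x b) -> le M (sup M P) b) /\
  (forall (P : car M -> Prop) x, P x -> le M (inf M P) x) /\
  (forall (P : car M -> Prop) b, (forall x, P x -> le M b x) -> le M b (inf M P)) /\
  (forall a b c, meet a (join b c) = join (meet a b) (meet a c)) /\
  (forall a, meet a (neg M a) = bot) /\
  (forall a, join a (neg M a) = top) /\
  box M top = top /\
  (forall a b, box M (meet a b) = meet (box M a) (box M b)) /\
  (forall a, le M (box M a) a) /\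
  (forall a, le M (box M a) (box M (box M a))).

Definition TD : Prop :=
  forall a, exists S : car M -> Prop,
    (forall x, S x -> locally_closed x) /\ a = sup M S.

Definition spatial : Prop :=
  forall a b, (forall x, is_atom x -> (le M x a <-> le M x b)) -> a = b.
End Ops.

Definition image {M N : MTAlg} (h : car M -> car N) (P : car M -> Prop)
  : car N -> Prop := fun y => exists x, P x /\ y = h x.

Definition MT_morphism {M N : MTAlg} (h : car M -> car N) : Prop :=
  (forall P, h (sup M P) = sup N (image h P)) /\
  (forall P, h (inf M P) = inf N (image h P)) /\
  (forall a, h (neg M a) = neg N (h a)) /\
  (forall a, le N (h (box M a)) (box N (h a))).

Definition ladj {M N : MTAlg} (h : car M -> car N) (b : car N) : car M :=
  inf M (fun a => le N b (h a)).

Definition D_morphism {M N : MTAlg} (h : car M -> car N) : Prop :=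
  MT_morphism h /\
  forall x : car N, is_atom N x -> locally_closed N x ->
    is_atom M (ladj h x) /\ locally_closed M (ladj h x).

Definition atD (M : MTAlg) : Type :=
  { x : car M | is_atom M x /\ locally_closed M x }.

(** Open subsets of the space at_D M: the sets chi_M(u), u open in M. *)
Definition atD_open {M : MTAlg} (U : atD M -> Prop) : Prop :=
  exists u, is_open M u /\ forall y : atD M, U y <-> le M (proj1_sig y) u.

(** The powerset MT-algebra P at_D M, interior = topological interior. *)
Definition PatD (M : MTAlg) : MTAlg := {|
  car := atD M -> Prop;
  le  := fun S T => forall x, S x -> T x;
  sup := fun F x => exists S, F S /\ S x;
  inf := fun F x => forall S, F S -> S x;
  neg := fun S x => ~ S x;
  box := fun S x => exists U, atD_open U /\ (forall y, U y -> S y) /\ U x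
|}.

Definition chi (M : MTAlg) (a : car M) : car (PatD M) :=
  fun y : atD M => le M (proj1_sig y) a.

(* Main.v *)
Require Import Defs.
From Stdlib Require Import Classical FunctionalExtensionality PropExtensionality ProofIrrelevance.

Ltac dMT H := destruct H as (Hr & Ht & Ha & Hsu & Hsl & Hil & Hig & Hd & Hmn & Hjn & Hbt & Hbm & Hbl & Hbb).


Lemma le_refl' {M} (H : is_MT M) a : le M a a.
Proof. dMT H; auto. Qed.
Lemma le_trans' {M} (H : is_MT M) a b c : le M a b -> le M b c -> le M a c.
Proof. dMT H; eauto. Qed.
Lemma le_anti {M} (H : is_MT M) a b : le M a b -> le M b a -> a = b.
Proof. dMT H; auto. Qed.
Lemma sup_ub {M} (H : is_MT M) (P : car M -> Prop) x : P x -> le M x (sup M P).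
Proof. dMT H; auto. Qed.
Lemma sup_lub {M} (H : is_MT M) (P : car M -> Prop) b : (forall x, P x -> le M x b) -> le M (sup M P) b.
Proof. dMT H; auto. Qed.
Lemma inf_lb {M} (H : is_MT M) (P : car M -> Prop) x : P x -> le M (inf M P) x.
Proof. dMT H; auto. Qed.
Lemma inf_glb {M} (H : is_MT M) (P : car M -> Prop) b : (forall x, P x -> le M b x) -> le M b (inf M P).
Proof. dMT H; auto. Qed.
Lemma distr {M} (H : is_MT M) a b c : meet M a (join M b c) = join M (meet M a b) (meet M a c).
Proof. dMT H; auto. Qed.
Lemma meet_neg {M} (H : is_MT M) a : meet M a (neg M a) = bot M.
Proof. dMT H; auto. Qed.
Lemma join_neg {M} (H : is_MT M) a : join M a (neg M a) = top M.
Proof. dMT H; auto. Qed.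
Lemma box_top {M} (H : is_MT M) : box M (top M) = top M.
Proof. dMT H; auto. Qed.
Lemma box_meet {M} (H : is_MT M) a b : box M (meet M a b) = meet M (box M a) (box M b).
Proof. dMT H; auto. Qed.
Lemma box_le {M} (H : is_MT M) a : le M (box M a) a.
Proof. dMT H; auto. Qed.
Lemma box_box {M} (H : is_MT M) a : le M (box M a) (box M (box M a)).
Proof. dMT H; auto. Qed.

Lemma bot_le {M} (H : is_MT M) a : le M (bot M) a.
Proof. apply sup_lub; auto; intros _ []. Qed.
Lemma le_top {M} (H : is_MT M) a : le M a (top M).
Proof. apply inf_glb; auto; intros _ []. Qed.
Lemma meet_lb1 {M} (H : is_MT M) a b : le M (meet M a b) a.
Proof. apply inf_lb; auto. Qed.
Lemma meet_lb2 {M} (H : is_MT M) a b : le M (meet M a b) b.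
Proof. apply inf_lb; auto. Qed.
Lemma meet_glb {M} (H : is_MT M) a b c : le M c a -> le M c b -> le M c (meet M a b).
Proof. intros; apply inf_glb; auto; intros x [->| ->]; auto. Qed.
Lemma join_ub1 {M} (H : is_MT M) a b : le M a (join M a b).
Proof. apply sup_ub; auto. Qed.
Lemma join_ub2 {M} (H : is_MT M) a b : le M b (join M a b).
Proof. apply sup_ub; auto. Qed.
Lemma join_lub {M} (H : is_MT M) a b c : le M a c -> le M b c -> le M (join M a b) c.
Proof. intros; apply sup_lub; auto; intros x [->| ->]; auto. Qed.
Lemma meet_comm {M} (H : is_MT M) a b : meet M a b = meet M b a.
Proof. apply le_anti; auto; apply meet_glb; auto using meet_lb1, meet_lb2. Qed.
Lemma meet_top {M} (H : is_MT M) a : meet M a (top M) = a.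
Proof. apply le_anti; auto using meet_lb1. apply meet_glb; auto using le_refl', le_top. Qed.
Lemma le_bot {M} (H : is_MT M) a : le M a (bot M) -> a = bot M.
Proof. intros; apply le_anti; auto using bot_le. Qed.
Lemma disj_le_neg {M} (H : is_MT M) a b : meet M a b = bot M -> le M b (neg M a).
Proof.
  intros E. apply le_trans' with (join M (meet M b a) (meet M b (neg M a))); auto.
  - rewrite <- distr, (join_neg H), meet_top; auto using le_refl'.
  - apply join_lub; auto using meet_lb2. rewrite meet_comm, E; auto using bot_le.
Qed.
Lemma le_neg_bot {M} (H : is_MT M) a c : le M c a -> le M c (neg M a) -> c = bot M.
Proof. intros; apply le_bot; auto. rewrite <- (meet_neg H a). apply meet_glb; auto. Qed.
Lemma neg_neg {M} (H : is_MT M) a : neg M (neg M a) = a.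
Proof.
  apply le_anti; auto.
  - apply le_trans' with (join M (meet M (neg M (neg M a)) a) (meet M (neg M (neg M a)) (neg M a))); auto.
    + rewrite <- distr, (join_neg H), meet_top; auto using le_refl'.
    + apply join_lub; auto using meet_lb2. rewrite meet_comm, meet_neg; auto using bot_le.
  - apply disj_le_neg; auto. rewrite meet_comm; auto; apply (meet_neg H).
Qed.
Lemma meet_mono {M} (H : is_MT M) a b c d : le M a c -> le M b d -> le M (meet M a b) (meet M c d).
Proof. intros; apply meet_glb; eauto using le_trans', meet_lb1, meet_lb2. Qed.
Lemma neg_anti {M} (H : is_MT M) a b : le M a b -> le M (neg M b) (neg M a).
Proof.
  intros; apply disj_le_neg; auto. apply le_bot; auto. rewrite <- (meet_neg H b).
  apply meet_mono; auto using le_refl'.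
Qed.
Lemma box_mono {M} (H : is_MT M) a b : le M a b -> le M (box M a) (box M b).
Proof.
  intros hab. assert (E : meet M a b = a) by (apply le_anti; auto using meet_lb1, meet_glb, le_refl').
  rewrite <- E, box_meet; auto using meet_lb2.
Qed.
Lemma box_idem {M} (H : is_MT M) a : box M (box M a) = box M a.
Proof. apply le_anti; auto using box_le, box_box. Qed.
Lemma dia_mono {M} (H : is_MT M) a b : le M a b -> le M (dia M a) (dia M b).
Proof. intros; unfold dia; auto using neg_anti, box_mono. Qed.
Lemma le_dia {M} (H : is_MT M) a : le M a (dia M a).
Proof.
  unfold dia. rewrite <- (neg_neg H a) at 1. apply neg_anti; auto using box_le.
Qed.
Lemma dia_dia {M} (H : is_MT M) a : le M (dia M (dia M a)) (dia M a).
Proof. unfold dia. rewrite neg_neg, box_idem; auto using le_refl'. Qed.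

Lemma atom_meet {M} (H : is_MT M) z a : is_atom M z -> ~ le M z a -> meet M z a = bot M.
Proof.
  intros [hne hm] hn. destruct (hm (meet M z a) (meet_lb1 H _ _)) as [|E]; auto.
  exfalso; apply hn; rewrite <- E; apply meet_lb2; auto.
Qed.
Lemma atom_not_le {M} (H : is_MT M) z a : is_atom M z -> ~ le M z a -> le M z (neg M a).
Proof. intros; apply disj_le_neg; auto. rewrite meet_comm; auto using atom_meet. Qed.
Lemma atom_neg_iff {M} (H : is_MT M) z a : is_atom M z -> (le M z (neg M a) <-> ~ le M z a).
Proof.
  intros ha; split; auto using atom_not_le.
  intros h1 h2. apply (proj1 ha). apply le_neg_bot with a; auto.
Qed.
Lemma atom_prime {M} (H : is_MT M) z P : is_atom M z -> le M z (sup M P) -> exists x, P x /\ le M z x.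
Proof.
  intros ha hz. apply NNPP; intros hn. apply (proj1 ha).
  apply le_neg_bot with z; auto using le_refl'.
  apply le_trans' with (sup M P); auto. apply sup_lub; auto. intros x hx.
  rewrite <- (neg_neg H x). apply neg_anti; auto. apply atom_not_le; auto.
  intro; apply hn; eauto.
Qed.
Lemma atom_le_atom {M} (H : is_MT M) x y : is_atom M x -> y <> bot M -> le M y x -> y = x.
Proof. intros [_ hm] hy hle. destruct (hm y hle); tauto. Qed.
Lemma atom_lc {M} (H : is_MT M) z : TD M -> is_atom M z -> locally_closed M z.
Proof.
  intros htd ha. destruct (htd z) as [S [hS E]].
  destruct (classic (exists s, S s /\ s <> bot M)) as [[s [hs hne]]|hn].
  - assert (s = z). { apply atom_le_atom; auto. rewrite E; apply sup_ub; auto. }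
    subst; auto.
  - exfalso. apply (proj1 ha). rewrite E. apply le_bot; auto. apply sup_lub; auto.
    intros x hx. destruct (classic (x = bot M)) as [->|]; auto using le_refl'.
    exfalso; eauto.
Qed.

Lemma hom_mono {M N} (HM : is_MT M) (HN : is_MT N) (h : car M -> car N) :
  MT_morphism h -> forall a b, le M a b -> le N (h a) (h b).
Proof.
  intros [hs _] a b hab.
  assert (E : join M a b = b) by (apply le_anti; auto using join_lub, join_ub2, le_refl').
  rewrite <- E. unfold join. rewrite hs. apply sup_ub; auto. exists a; auto.
Qed.
Lemma hom_bot {M N} (HM : is_MT M) (HN : is_MT N) (h : car M -> car N) :
  MT_morphism h -> h (bot M) = bot N.
Proof.
  intros [hs _]. unfold bot at 1. rewrite hs. apply le_bot; auto. apply sup_lub; auto.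
  intros y [x [[] _]].
Qed.
Lemma ladj_unit {M N} (HM : is_MT M) (HN : is_MT N) (h : car M -> car N) z :
  MT_morphism h -> le N z (h (ladj h z)).
Proof.
  intros [_ [hi _]]. unfold ladj. rewrite hi. apply inf_glb; auto.
  intros y [x [hx ->]]; auto.
Qed.
Lemma ladj_le {M N} (HM : is_MT M) (h : car M -> car N) z a :
  le N z (h a) -> le M (ladj h z) a.
Proof. intros; unfold ladj; apply inf_lb; auto. Qed.

Lemma ladj_atom {M N} (HM : is_MT M) (HN : is_MT N) (h : car M -> car N) x :
  MT_morphism h -> is_atom N x -> is_atom M (ladj h x).
Proof.
  intros hh ha. split.
  - intros E. apply (proj1 ha). apply le_bot; auto.
    rewrite <- (hom_bot HM HN h hh), <- E. apply ladj_unit; auto.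
  - intros q hq. destruct (classic (le N x (h q))) as [hx|hx].
    + right; apply le_anti; auto using ladj_le.
    + left. apply le_neg_bot with q; auto using le_refl'.
      apply le_trans' with (ladj h x); auto. apply (ladj_le HM h x (neg M q)).
      destruct hh as (_ & _ & hn & _). rewrite hn. apply atom_not_le; auto.
Qed.

Lemma fullness (M N : MTAlg) (h : car M -> car N) :
  is_MT M -> TD M -> is_MT N -> MT_morphism h -> D_morphism h.
Proof.
  intros HM hT HN hh. split; auto. intros x ha _.
  assert (is_atom M (ladj h x)) by (apply ladj_atom; auto).
  split; auto using atom_lc.
Qed.

Lemma P_ext {M} (A B : car (PatD M)) : (forall x, A x <-> B x) -> A = B.
Proof. intros h; apply functional_extensionality; intros x; apply propositional_extensionality; auto. Qed.
Lemma atD_eq {M} (x y : atD M) : proj1_sig x = proj1_sig y -> x = y.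
Proof. destruct x, y; simpl; intros ->; f_equal; apply proof_irrelevance. Qed.
Lemma P_meet {M} (A B : car (PatD M)) x : meet (PatD M) A B x <-> A x /\ B x.
Proof. unfold meet; simpl; split; [intros h; split; apply h; auto | intros [a b] S [-> | ->]; auto]. Qed.
Lemma P_join {M} (A B : car (PatD M)) x : join (PatD M) A B x <-> A x \/ B x.
Proof. unfold join; simpl; split; [intros [S [[-> | ->] h]]; auto | intros [h|h]; eauto]. Qed.
Lemma P_bot {M} x : bot (PatD M) x <-> False.
Proof. unfold bot; simpl; split; [intros [S [[] _]] | intros []]. Qed.
Lemma P_top {M} x : top (PatD M) x <-> True.
Proof. unfold top; simpl; split; auto. intros _ S []. Qed.

Lemma chi_open {M} (H : is_MT M) u : is_open M u -> atD_open (chi M u).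
Proof. intros hu; exists u; split; auto; intros; unfold chi; tauto. Qed.

Lemma PatD_MT M : is_MT M -> is_MT (PatD M).
Proof.
  intros H.
  split; [simpl; auto|]. split; [simpl; auto|]. split.
  { simpl; intros a b h1 h2; apply P_ext; split; auto. }
  split; [simpl; eauto|]. split; [simpl; intros P b h x [S [hS hx]]; eapply h; eauto|].
  split; [simpl; intros P x hx y hy; apply hy; auto|].
  split; [simpl; intros P b h y hy S hS; apply h; auto|].
  split. { intros a b c; apply P_ext; intros x. repeat (rewrite ?P_meet, ?P_join). tauto. }
  split. { intros a; apply P_ext; intros x; rewrite P_meet, P_bot; simpl; tauto. }
  split. { intros a; apply P_ext; intros x; rewrite P_join, P_top; simpl; tauto. }
  split.
  { apply P_ext; intros x; rewrite P_top; simpl; split; auto; intros _.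
    exists (chi M (top M)). split; [apply chi_open; auto; apply box_top; auto|].
    split; [intros; apply P_top; auto|]. apply le_top; auto. }
  split.
  { intros a b; apply P_ext; intros x. rewrite P_meet. simpl. split.
    - intros [U [hU [hs hx]]]. split; exists U; repeat split; auto; intros y hy; [apply (hs y hy a) | apply (hs y hy b)]; auto.
    - intros [[U [[u [hu hU]] [hs hx]]] [V [[v [hv hV]] [hs' hx']]]].
      exists (chi M (meet M u v)). split.
      { apply chi_open; auto. unfold is_open in *. rewrite box_meet, hu, hv; auto. }
      split.
      + intros y hy. apply P_meet. split; [apply hs, hU | apply hs', hV];
          (eapply le_trans'; [auto | apply hy | ]); auto using meet_lb1, meet_lb2.
      + unfold chi. apply meet_glb; auto; [apply hU | apply hV]; auto. }
  split; [simpl; intros a x [U [_ [h hx]]]; auto|].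
  simpl; intros a x [U [hU [h hx]]]. exists U; split; auto. split; auto.
  intros y hy; exists U; auto.
Qed.

Lemma single_atom {M} (x : atD M) : is_atom (PatD M) (fun y => y = x).
Proof.
  split.
  - intros E. apply (proj1 (P_bot (M:=M) x)). rewrite <- E. reflexivity.
  - intros Y hY. destruct (classic (Y x)) as [hx|hx].
    + right; apply P_ext; intros y; split; [apply hY| intros ->; auto].
    + left; apply P_ext; intros y; rewrite P_bot; split; [|tauto].
      intros hy; pose proof (hY y hy) as e; simpl in e; subst; auto.
Qed.

Lemma atom_single {M} (X : car (PatD M)) : is_atom (PatD M) X -> exists x, forall y, X y <-> y = x.
Proof.
  intros [hne hm]. destruct (classic (exists x, X x)) as [[x hx]|hn].
  - destruct (hm (fun y => y = x)) as [E|E].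
    + simpl; intros y ->; auto.
    + exfalso; apply (proj1 (P_bot (M:=M) x)). rewrite <- E. reflexivity.
    + exists x; intros y. rewrite <- E. tauto.
  - exfalso; apply hne; apply P_ext; intros y; rewrite P_bot; split; [|tauto]. intros; eauto.
Qed.

Lemma PatD_spatial M : spatial (PatD M).
Proof.
  intros a b h. apply P_ext; intros z. specialize (h _ (single_atom z)). simpl in h.
  split; intros hz; apply h; auto; intros y ->; auto.
Qed.

Lemma box_open {M} (H : is_MT M) a : is_open M (box M a).
Proof. apply box_idem; auto. Qed.

Lemma atD_ne {M} (x : atD M) : proj1_sig x <> bot M.
Proof. exact (proj1 (proj1 (proj2_sig x))). Qed.
Lemma atD_atom {M} (x : atD M) : is_atom M (proj1_sig x).
Proof. exact (proj1 (proj2_sig x)). Qed.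

Lemma single_lc {M} (H : is_MT M) (x : atD M) : locally_closed (PatD M) (fun y => y = x).
Proof.
  destruct (proj2 (proj2_sig x)) as [b [c E]].
  set (x0 := proj1_sig x) in *.
  exists (chi M (box M b)), (fun y => y = x).
  apply P_ext; intros z. rewrite P_meet. unfold dia; simpl. split.
  - intros ->. split.
    + exists (chi M (box M b)). split; [apply chi_open; auto using box_open|]. split; auto.
      unfold chi. fold x0. rewrite E. apply meet_lb1; auto.
    + intros [U [_ [hn hx]]]. apply (hn x hx); auto.
  - intros [[U [[u [hu hU]] [hs hz]]] hn]. pose proof (hs z hz) as hb. unfold chi in hb.
    destruct (classic (le M (proj1_sig z) (dia M x0))) as [hd|hd].
    + apply atD_eq. apply atom_le_atom; auto using atD_atom, atD_ne. fold x0.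
      rewrite E. apply meet_glb; auto.
      apply le_trans' with (dia M x0); auto.
      apply le_trans' with (dia M (dia M c)); auto using dia_dia. apply dia_mono; auto.
      rewrite E at 1. apply meet_lb2; auto.
    + exfalso. apply hn. exists (chi M (box M (neg M x0))). split; [apply chi_open; auto using box_open|].
      split.
      * intros y hy ->. unfold chi in hy. fold x0 in hy. apply (atD_ne x).
        apply le_neg_bot with x0; auto using le_refl'. eapply le_trans'; eauto using box_le.
      * unfold chi. rewrite <- (neg_neg H (box M (neg M x0))). apply atom_not_le; auto using atD_atom.
Qed.

Lemma PatD_TD {M} (H : is_MT M) : TD (PatD M).
Proof.
  intros a. exists (fun T => exists x, a x /\ T = (fun y => y = x)). split.
  - intros T [x [_ ->]]. apply single_lc; auto.
  - apply P_ext; intros z; simpl. split.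
    + intros hz. exists (fun y => y = z); split; eauto.
    + intros [T [[x [hx ->]] ->]]; auto.
Qed.

Lemma chi_D {M} (H : is_MT M) : D_morphism (chi M).
Proof.
  split; [split; [|split; [|split]]|].
  - intros P; apply P_ext; intros z; unfold chi; simpl. split.
    + intros hz. destruct (atom_prime H _ _ (atD_atom z) hz) as [x [hx hzx]].
      exists (fun y => le M (proj1_sig y) x). split; [exists x; split; auto | auto].
    + intros [S [[x [hx E]] hz]]. subst S. eapply le_trans'; eauto using sup_ub.
  - intros P; apply P_ext; intros z; unfold chi; simpl. split.
    + intros hz S [x [hx E]]. subst S. eapply le_trans'; eauto using inf_lb.
    + intros h. apply inf_glb; auto. intros x hx. apply (h (fun y => le M (proj1_sig y) x)). exists x; auto.
  - intros a; apply P_ext; intros z; unfold chi; simpl. apply atom_neg_iff; auto using atD_atom.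
  - intros a z hz. simpl. exists (chi M (box M a)). split; [apply chi_open; auto using box_open|].
    split; auto. intros y hy. unfold chi in *. eapply le_trans'; eauto using box_le.
  - intros X hX _. destruct (atom_single X hX) as [x hx].
    assert (E : ladj (chi M) X = proj1_sig x).
    { apply le_anti; auto.
      - apply inf_lb; auto. simpl. intros y hy. apply hx in hy. subst. apply le_refl'; auto.
      - apply inf_glb; auto. intros a ha. apply (ha x). apply hx; auto. }
    rewrite E. apply (proj2_sig x).
Qed.

Definition fh {M N : MTAlg} (f : car M -> car N) (S : car (PatD M)) : car N :=
  sup N (fun y => exists x : atD M, S x /\ y = f (proj1_sig x)).

Lemma fh_key {M N} (H : is_MT M) (HN : is_MT N) (f : car M -> car N) :
  TD N -> D_morphism f -> forall z, is_atom N z ->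
  exists pz : atD M, proj1_sig pz = ladj f z /\ forall S, le N z (fh f S) <-> S pz.
Proof.
  intros tdN Df z hz. pose proof (atom_lc HN z tdN hz) as hlc.
  destruct (proj2 Df z hz hlc) as [ha hl].
  exists (exist _ (ladj f z) (conj ha hl)). split; auto. intros S. split.
  - intros hle. destruct (atom_prime HN _ _ hz hle) as [y [[x [hx ->]] hzy]].
    replace (exist _ (ladj f z) (conj ha hl)) with x; auto.
    apply atD_eq; simpl. symmetry. apply atom_le_atom; auto using atD_atom.
    + apply (proj1 ha).
    + apply ladj_le; auto.
  - intros hS. apply le_trans' with (f (ladj f z)); auto.
    + apply ladj_unit; auto. apply (proj1 Df).
    + apply sup_ub; auto. exists (exist _ (ladj f z) (conj ha hl)); auto.
Qed.

Lemma fh_mono {M N} (HN : is_MT N) (f : car M -> car N) (S T : car (PatD M)) :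
  (forall x, S x -> T x) -> le N (fh f S) (fh f T).
Proof.
  intros h. apply sup_lub; auto. intros y [x [hx ->]]. apply sup_ub; auto. exists x; auto.
Qed.

Lemma fh_chi {M N} (H : is_MT M) (HN : is_MT N) (f : car M -> car N) :
  spatial N -> TD N -> D_morphism f -> forall a, fh f (chi M a) = f a.
Proof.
  intros spN tdN Df a. apply spN. intros z hz.
  destruct (fh_key H HN f tdN Df z hz) as [pz [E K]]. rewrite K. unfold chi. rewrite E.
  split.
  - intros h. apply le_trans' with (f (ladj f z)); auto.
    + apply ladj_unit; auto. apply (proj1 Df).
    + apply (hom_mono H HN); auto. apply (proj1 Df).
  - apply ladj_le; auto.
Qed.

Lemma fh_MT {M N} (H : is_MT M) (HN : is_MT N) (f : car M -> car N) :
  spatial N -> TD N -> D_morphism f -> MT_morphism (fh f).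
Proof.
  intros spN tdN Df. split; [|split; [|split]].
  - intros F. apply spN. intros z hz.
    destruct (fh_key H HN f tdN Df z hz) as [pz [_ K]]. rewrite K. simpl. split.
    + intros [S [hF hS]]. apply le_trans' with (fh f S); auto.
      * apply K; auto.
      * apply sup_ub; auto. exists S; auto.
    + intros hle. destruct (atom_prime HN _ _ hz hle) as [y [[S [hF ->]] hzy]].
      exists S; split; auto. apply K; auto.
  - intros F. apply spN. intros z hz.
    destruct (fh_key H HN f tdN Df z hz) as [pz [_ K]]. rewrite K. simpl. split.
    + intros h. apply inf_glb; auto. intros y [S [hF ->]]. apply K; apply h; auto.
    + intros hle S hF. apply K. eapply le_trans'; eauto. apply inf_lb; auto. exists S; auto.
  - intros S. apply spN. intros z hz.
    destruct (fh_key H HN f tdN Df z hz) as [pz [_ K]]. rewrite K, atom_neg_iff, K; auto.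
    simpl; tauto.
  - intros S. apply sup_lub; auto. intros y [x [[U [[u [hu hU]] [hs hx]]] ->]].
    apply (le_trans' HN) with (f u).
    { apply (hom_mono H HN f (proj1 Df)). apply hU; auto. }
    apply (le_trans' HN) with (box N (f u)).
    { unfold is_open in hu. rewrite <- hu at 1. apply (proj1 Df). }
    apply box_mono; auto. rewrite <- (fh_chi H HN f spN tdN Df u).
    apply fh_mono; auto. intros w hw. apply hs, hU; auto.
Qed.

Lemma fh_unique {M N} (H : is_MT M) (HN : is_MT N) (f : car M -> car N) (g : car (PatD M) -> car N) :
  MT_morphism g -> (forall a, g (chi M a) = f a) -> g = fh f.
Proof.
  intros hg hgc. apply functional_extensionality; intros S.
  set (F := fun T : car (PatD M) => exists x, S x /\ T = chi M (proj1_sig x)).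
  assert (hS : S = sup (PatD M) F).
  { apply P_ext; intros z; simpl. split.
    - intros hz. exists (chi M (proj1_sig z)). split; [exists z; auto | apply le_refl'; auto].
    - intros [T [[x [hx ->]] hz]]. unfold chi in hz.
      replace z with x; auto. apply atD_eq. symmetry.
      apply atom_le_atom; auto using atD_atom, atD_ne. }
  transitivity (g (sup (PatD M) F)); [f_equal; auto|].
  rewrite (proj1 hg). apply le_anti; auto.
  - apply sup_lub; auto. intros y [T [[x [hx ->]] ->]]. rewrite hgc.
    apply sup_ub; auto. exists x; auto.
  - apply sup_lub; auto. intros y [x [hx ->]]. apply sup_ub; auto.
    exists (chi M (proj1_sig x)). split; [exists x; auto | auto].
Qed.

Theorem theorem5p18 :
  (* fullness: MT-morphisms between spatial T_D-algebras are D-morphisms *)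
  (forall (M N : MTAlg) (h : car M -> car N),
      is_MT M -> spatial M -> TD M ->
      is_MT N -> spatial N -> TD N ->
      MT_morphism h -> D_morphism h)
  /\
  (* reflection *)
  (forall M : MTAlg, is_MT M ->
      is_MT (PatD M) /\ spatial (PatD M) /\ TD (PatD M) /\
      D_morphism (chi M) /\
      (forall (N : MTAlg) (f : car M -> car N),
          is_MT N -> spatial N -> TD N -> D_morphism f ->
          let fhat := fun S : car (PatD M) =>
                        sup N (fun y => exists x : atD M, S x /\ y = f (proj1_sig x)) in
          MT_morphism fhat /\
          (forall a, fhat (chi M a) = f a) /\
          (forall g : car (PatD M) -> car N,
              MT_morphism g -> (forall a, g (chi M a) = f a) -> g = fhat))).
Proof.
  split.
  - intros M N h HM _ tdM HN _ _ hh. apply fullness; auto.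
  - intros M H. split; [apply PatD_MT; auto|]. split; [apply PatD_spatial|].
    split; [apply PatD_TD; auto|]. split; [apply chi_D; auto|].
    intros N f HN spN tdN Df fhat.
    change fhat with (fh f).
    split; [apply fh_MT; auto|]. split; [apply fh_chi; auto|].
    intros g hg hgc. apply fh_unique; auto.
Qed.
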